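(* Let $F\colon\mathbf{A}\to\mathbf{B}$ be a lens, and let $\bar J_1,\bar J_2\colon\mathbf{B}\to\mathbf{C}$ be the cokernel pair of the get functor $UF$ in $\mathbf{Cat}$ (i.e. the two injections of the pushout of $UF$ along itself). Then $\bar J_1$ and $\bar J_2$ are cosieves, and the unique lenses $J_1$ and $J_2$ whose get functors are $\bar J_1$ and $\bar J_2$ satisfy $J_1\circ F=J_2\circ F$ in $\mathbf{Lens}$.
   Context: A lens $F\colon \mathbf{A}\to\mathbf{B}$ between small categories consists of a functor $F\colon\mathbf{A}\to\mathbf{B}$ (the get functor) together with, for each object $A$ of $\mathbf{A}$, a function $\varphi_{F,A}$ from the set of morphisms of $\mathbf{B}$ with domain $FA$ to the set of morphisms of $\mathbf{A}$ with domain $A$, such that: $F(\varphi_{F,A}b)=b$; $\varphi_{F,A}(\mathrm{id}_{FA})=\mathrm{id}_A$; and $\varphi_{F,A}(b'\circ b)=\varphi_{F,A'}(b')\circ\varphi_{F,A}(b)$ whenever $b$ has domain $FA$, $A'$ is the codomain of $\varphi_{F,A}b$, and $b'$ has domain $FA'$. $\mathbf{Lens}$ is the category of small categories and lenses, with composite of $F\colon\mathbf{A}\to\mathbf{B}$, $G\colon\mathbf{B}\to\mathbf{C}$ having get functor $G\circ F$ and puts $\varphi_{G\circ F,A}(c)=\varphi_{F,A}(\varphi_{G,FA}(c))$. $U\colon\mathbf{Lens}\to\mathbf{Cat}$ sends a lens to its get functor. A functor $F\colon\mathbf{A}\to\mathbf{B}$ is a discrete opfibration if for each object $A$ and each morphism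 $b$ of $\mathbf{B}$ with domain $FA$ there is a unique morphism $a$ of $\mathbf{A}$ with domain $A$ and $Fa=b$; a discrete opfibration has exactly one lens structure (puts given by these unique lifts). A cosieve is an injective-on-objects discrete opfibration. *)

(* Defs.v *)
From Stdlib Require Import Utf8.

(** Composition is a total
    function whose value is only constrained on composable pairs
    (cod f = dom g); its value on non-composable pairs is irrelevant. *)
Record cat := Cat {
  ob : Type;
  arr : Type;
  dom : arr -> ob;
  cod : arr -> ob;
  idn : ob -> arr;
  comp : arr -> arr -> arr;
  dom_idn : forall x, dom (idn x) = x;
  cod_idn : forall x, cod (idn x) = x;
  dom_comp : forall f g, cod f = dom g -> dom (comp g f) = dom f;
  cod_comp : forall f g, cod f = dom g -> cod (comp g f) = cod g;
  comp_idl : forall f, comp (idn (cod f)) f = f;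
  comp_idr : forall f, comp f (idn (dom f)) = f;
  comp_assoc : forall f g h, cod f = dom g -> cod g = dom h ->
    comp h (comp g f) = comp (comp h g) f
}.

Arguments dom {c} _.
Arguments cod {c} _.
Arguments idn {c} _.
Arguments comp {c} _ _.

Record functor (A B : cat) := Functor {
  fo : ob A -> ob B;
  fa : arr A -> arr B;
  fdom : forall f, dom (fa f) = fo (dom f);
  fcod : forall f, cod (fa f) = fo (cod f);
  fidn : forall x, fa (idn x) = idn (fo x);
  fcomp : forall f g, cod f = dom g -> fa (comp g f) = comp (fa g) (fa f)
}.

Arguments fo {A B} _ _.
Arguments fa {A B} _ _.

Definition feq {A B : cat} (F G : functor A B) : Prop :=
  (forall x, fo F x = fo G x) /\ (forall f, fa F f = fa G f).

Definition fcompose {A B C : cat} (F : functor A B) (G : functor B C) : functor A C.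
Proof.
  refine (@Functor A C (fun x => fo G (fo F x)) (fun f => fa G (fa F f)) _ _ _ _).
  - intro f. rewrite fdom, fdom. reflexivity.
  - intro f. rewrite fcod, fcod. reflexivity.
  - intro x. rewrite fidn, fidn. reflexivity.
  - intros f g H. rewrite fcomp by exact H. apply fcomp.
    rewrite fcod, fdom, H. reflexivity.
Defined.

Definition is_pushout {A B B' C : cat} (F : functor A B) (G : functor A B')
    (J1 : functor B C) (J2 : functor B' C) : Prop :=
  feq (fcompose F J1) (fcompose G J2) /\
  forall (D : cat) (K1 : functor B D) (K2 : functor B' D),
    feq (fcompose F K1) (fcompose G K2) ->
    (exists H : functor C D, feq (fcompose J1 H) K1 /\ feq (fcompose J2 H) K2) /\
    (forall H H' : functor C D,
        feq (fcompose J1 H) K1 -> feq (fcompose J2 H) K2 ->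
        feq (fcompose J1 H') K1 -> feq (fcompose J2 H') K2 -> feq H H').

Definition discrete_opfibration {A B : cat} (F : functor A B) : Prop :=
  forall (a : ob A) (b : arr B), dom b = fo F a ->
    exists! x : arr A, dom x = a /\ fa F x = b.

Definition cosieve {A B : cat} (F : functor A B) : Prop :=
  (forall x y : ob A, fo F x = fo F y -> x = y) /\ discrete_opfibration F.

(** Lens structure on a functor: [put a b] is φ_{F,a}(b); only its values on
    arrows [b] with [dom b = F a] matter. *)
Definition is_lens {A B : cat} (F : functor A B) (put : ob A -> arr B -> arr A) : Prop :=
  (forall a b, dom b = fo F a -> dom (put a b) = a /\ fa F (put a b) = b) /\
  (forall a, put a (idn (fo F a)) = idn a) /\
  (forall a b b', dom b = fo F a -> dom b' = fo F (cod (put a b)) ->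
     put a (comp b' b) = comp (put (cod (put a b)) b') (put a b)).

Record lens (A B : cat) := Lens {
  lget : functor A B;
  lput : ob A -> arr B -> arr A;
  lens_ax : is_lens lget lput
}.

Arguments lget {A B} _.
Arguments lput {A B} _ _ _.

Definition lens_eq {A B : cat} (L L' : lens A B) : Prop :=
  feq (lget L) (lget L') /\
  (forall a b, dom b = fo (lget L) a -> lput L a b = lput L' a b).

Definition lens_comp {A B C : cat} (F : lens A B) (G : lens B C) : lens A C.
Proof.
  refine (@Lens A C (fcompose (lget F) (lget G))
            (fun a c => lput F a (lput G (fo (lget F) a) c)) _).
  destruct F as [F pF [HF1 [HF2 HF3]]], G as [G pG [HG1 [HG2 HG3]]]; simpl.
  split; [|split].
  - intros a c Hc.
    destruct (HG1 _ _ Hc) as [Hd Hf].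
    destruct (HF1 _ _ Hd) as [Hd' Hf'].
    split; [exact Hd'|]. simpl. rewrite Hf', Hf. reflexivity.
  - intro a. rewrite HG2, HF2. reflexivity.
  - intros a c c' Hc Hc'.
    destruct (HG1 _ _ Hc) as [Hd Hf].
    destruct (HF1 _ _ Hd) as [Hd' Hf'].
    assert (E : fo F (cod (pF a (pG (fo F a) c))) = cod (pG (fo F a) c)).
    { rewrite <- fcod, Hf'. reflexivity. }
    simpl. rewrite HG3; [| exact Hc | simpl in Hc'; rewrite E in Hc'; exact Hc'].
    rewrite E.
    apply HF3; [exact Hd|].
    destruct (HG1 (cod (pG (fo F a) c)) c') as [Hd2 _];
      [simpl in Hc'; rewrite E in Hc'; exact Hc'|].
    rewrite Hd2, E. reflexivity.
Defined.

(* Main.v *)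
Require Import Defs.
From Stdlib Require Import ClassicalEpsilon Bool.

Definition sB {A B : cat} (F : functor A B) (y : ob B) : bool :=
  if excluded_middle_informative (exists a, fo F a = y) then true else false.

Lemma sB_true {A B : cat} (F : functor A B) y : sB F y = true <-> exists a, fo F a = y.
Proof.
  unfold sB; destruct excluded_middle_informative; split; intros; auto; try discriminate; contradiction.
Qed.

Lemma sB_up {A B : cat} (F : lens A B) (b : arr B) :
  sB (lget F) (dom b) = true -> sB (lget F) (cod b) = true.
Proof.
  intro H; apply sB_true in H; destruct H as [a Ha]; apply sB_true; revert Ha.
  destruct F as [Fg pp HH]; destruct HH as [H1 H2]; simpl in *; intro Ha.
  destruct (H1 a b (eq_sym Ha)) as [Hd Hf].
  exists (cod (pp a b)). rewrite <- fcod, Hf. reflexivity.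
Qed.

Definition Pcat (B : cat) (s : ob B -> bool)
  (up : forall b : arr B, s (dom b) = true -> s (cod b) = true) : cat.
Proof.
  refine (@Cat (ob B * bool) (arr B * bool) (fun f => (dom (fst f), snd f))
    (fun f => (cod (fst f), snd f || (s (cod (fst f)) && negb (s (dom (fst f))))))
    (fun x => (idn (fst x), snd x)) (fun g f => (comp (fst g) (fst f), snd f))
    _ _ _ _ _ _ _).
  - intros [y t]; simpl; rewrite dom_idn; reflexivity.
  - intros [y t]; simpl; rewrite cod_idn, dom_idn; destruct (s y), t; reflexivity.
  - intros [f t] [g u] H; simpl in *; injection H as H1 H2; rewrite dom_comp by exact H1; reflexivity.
  - intros [f t] [g u] H; simpl in *; injection H as H1 H2; subst u.
    rewrite cod_comp, dom_comp by exact H1. f_equal.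
    pose proof (up f) as Uf; pose proof (up g) as Ug. rewrite <- H1 in Ug |- *.
    destruct t, (s (dom f)), (s (cod f)), (s (cod g)); simpl in *; try reflexivity; try (specialize (Uf eq_refl); discriminate); try (specialize (Ug eq_refl); discriminate).
  - intros [f t]; simpl; rewrite comp_idl; reflexivity.
  - intros [f t]; simpl; rewrite comp_idr; reflexivity.
  - intros [f t] [g u] [h v] H H'; simpl in *; injection H as H1 H2; injection H' as H3 H4.
    rewrite comp_assoc by assumption; reflexivity.
Defined.

Definition Kf (B : cat) (s : ob B -> bool)
  (up : forall b : arr B, s (dom b) = true -> s (cod b) = true) (i : bool) :
  functor B (Pcat B s up).
Proof.
  refine (@Functor B (Pcat B s up) (fun y => (y, i || s y)) (fun b => (b, i || s (dom b))) _ _ _ _).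
  - intro f; reflexivity.
  - intro f; simpl. f_equal. pose proof (up f) as U.
    destruct i, (s (dom f)), (s (cod f)); simpl in *; intuition congruence.
  - intro x; simpl; rewrite dom_idn; reflexivity.
  - intros f g H; simpl; rewrite dom_comp by exact H; reflexivity.
Defined.

Definition Gf (B C : cat) (s : ob B -> bool)
  (up : forall b : arr B, s (dom b) = true -> s (cod b) = true)
  (J1 J2 : functor B C)
  (oe : forall y, s y = true -> fo J1 y = fo J2 y)
  (ae : forall g, s (dom g) = true -> fa J1 g = fa J2 g) :
  functor (Pcat B s up) C.
Proof.
  refine (@Functor (Pcat B s up) C
    (fun x => if snd x then fo J1 (fst x) else fo J2 (fst x))
    (fun f => if snd f then fa J1 (fst f) else fa J2 (fst f)) _ _ _ _).
  - intros [f t]; destruct t; simpl; apply fdom.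
  - intros [f t]; destruct t; simpl; [apply fcod|].
    rewrite fcod. destruct (s (cod f)) eqn:E; simpl; [|reflexivity].
    destruct (s (dom f)); simpl; [reflexivity|]. symmetry; apply oe; exact E.
  - intros [y t]; destruct t; simpl; apply fidn.
  - intros [f t] [g u] H; simpl in *; injection H as H1 H2; subst u.
    destruct t; simpl; rewrite fcomp by exact H1; [reflexivity|].
    destruct (s (cod f)) eqn:E; simpl; [|reflexivity].
    destruct (s (dom f)); simpl; [reflexivity|].
    rewrite ae; [reflexivity| rewrite <- H1; exact E].
Defined.

Definition idF (B : cat) : functor B B.
Proof.
  refine (@Functor B B (fun x => x) (fun f => f) _ _ _ _); reflexivity.
Defined.

Theorem proposition3p9 (A B C : cat) (F : lens A B) (J1b J2b : functor B C) :
  is_pushout (lget F) (lget F) J1b J2b ->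
  cosieve J1b /\ cosieve J2b /\
  (forall J1 J2 : lens B C,
     feq (lget J1) J1b -> feq (lget J2) J2b ->
     lens_eq (lens_comp F J1) (lens_comp F J2)).
Proof.
  intros [[Co Ca] U].
  set (s := sB (lget F)).
  assert (up : forall b : arr B, s (dom b) = true -> s (cod b) = true) by apply sB_up.
  assert (oe : forall y, s y = true -> fo J1b y = fo J2b y).
  { intros y Hy; apply sB_true in Hy; destruct Hy as [a <-]; apply Co. }
  assert (ae : forall g, s (dom g) = true -> fa J1b g = fa J2b g).
  { intros g Hg; apply sB_true in Hg; destruct Hg as [a Ha].
    destruct F as [Fg p [H1 H2x]]; simpl in *.
    destruct (H1 a g (eq_sym Ha)) as [_ Hf]. rewrite <- Hf. apply Ca. }
  destruct (U B (idF B) (idF B)) as [[Hid [Hid1 Hid2]] _].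
  { split; reflexivity. }
  destruct Hid1 as [I1o I1a]; destruct Hid2 as [I2o I2a]; simpl in *.
  set (P := Pcat B s up).
  set (K1 := Kf B s up true). set (K2 := Kf B s up false).
  destruct (U P K1 K2) as [[H0 [[H1o H1a] [H2o H2a]]] _].
  { split; intros; simpl; f_equal; symmetry; apply sB_true; [eauto| rewrite fdom; eauto]. }
  simpl in H1o, H1a, H2o, H2a.


  set (G := Gf B C s up J1b J2b oe ae).
  assert (GH : feq (fcompose H0 G) (idF C)).
  { destruct (U C J1b J2b) as [_ Uq]; [split; assumption|].
    apply (Uq _ _); split; intros; simpl; try reflexivity.
    - rewrite H1o; reflexivity.
    - rewrite H1a; reflexivity.
    - rewrite H2o; simpl. destruct (s x) eqn:E; simpl; [apply oe; exact E|reflexivity].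
    - rewrite H2a; simpl. destruct (s (dom f)) eqn:E; simpl; [apply ae; exact E|reflexivity]. }
  destruct GH as [_ GHa]; simpl in GHa.
  assert (Hdop : forall (t : bool) (x : ob B) (c : arr C),
            fo H0 (dom c) = (x, t || s x) ->
            exists b, dom b = x /\ (if t || s x then fa J1b b else fa J2b b) = c).
  { intros t x c Hc. rewrite <- fdom in Hc. destruct (fa H0 c) as [b u] eqn:E.
    simpl in Hc. injection Hc as Hx Hu. exists b; split; [exact Hx|].
    rewrite <- (GHa c), E. simpl. rewrite Hu. reflexivity. }
  split; [|split].
  - split.
    + intros x y E. rewrite <- (I1o x), <- (I1o y), E. reflexivity.
    + intros x c Hc. destruct (Hdop true x c) as [b [Hb1 Hb2]].
      { rewrite Hc, H1o. reflexivity. }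
      simpl in Hb2.
      exists b; split; [split; [exact Hb1|exact Hb2]|].
      intros b' [Hb1' Hb2']. rewrite <- (I1a b), <- (I1a b'), Hb2, Hb2'. reflexivity.
  - split.
    + intros x y E. rewrite <- (I2o x), <- (I2o y), E. reflexivity.
    + intros x c Hc. destruct (Hdop false x c) as [b [Hb1 Hb2]].
      { rewrite Hc, H2o. reflexivity. }
      simpl in Hb2.
      exists b; split; [split; [exact Hb1|]|].
      * destruct (s x) eqn:E; [|exact Hb2]. rewrite <- ae; [exact Hb2|rewrite Hb1; exact E].
      * intros b' [Hb1' Hb2']. rewrite <- (I2a b), <- (I2a b').
        assert (fa J2b b = c).
        { destruct (s x) eqn:E; [|exact Hb2]. rewrite <- ae; [exact Hb2|rewrite Hb1; exact E]. }
        congruence.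
  - intros J1 J2 [E1o E1a] [E2o E2a]. split.
    + split; intros; simpl; [rewrite E1o, E2o; apply Co | rewrite E1a, E2a; apply Ca].
    + intros a c Hc. simpl in *. f_equal.
      destruct J1 as [L1 p1 [P1 P1x]], J2 as [L2 p2 [P2 P2x]]; simpl in *.
      assert (Hs : s (fo (lget F) a) = true) by (apply sB_true; eauto).
      destruct (P1 (fo (lget F) a) c Hc) as [D1 F1].
      destruct (P2 (fo (lget F) a) c) as [D2 F2].
      { rewrite Hc, E1o, E2o; apply oe; exact Hs. }
      rewrite <- (I2a (p1 _ c)), <- (I2a (p2 _ c)). f_equal.
      transitivity c; [| rewrite <- E2a, F2; reflexivity]. rewrite <- ae; [rewrite <- E1a, F1; reflexivity| rewrite D1; exact Hs].
Qed.
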